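(* In a diagonal positive unital circuit, every operator $O_k(\mathbf{x}_k)$ (for every unit $k$ and every assignment $\mathbf{x}_k$) is a diagonal matrix.
   Context: A partition circuit over discrete variables $\mathbf{x}=\{x_0,\dots,x_{N-1}\}$ is a rooted binary tree whose leaves are in bijection with the variables (leaf $k$ carries $x_k$ with finite value set $\Omega(X_k)$), each internal unit $k$ having two children $k_l,k_r$; $\mathbf{x}_k$ denotes an assignment to the variables at leaves below $k$. A diagonal positive unital circuit assigns: to each leaf $k$ diagonal complex matrices $\Delta_{x_k}$, $x_k\in\Omega(X_k)$, with $\sum_{x_k}\Delta_{x_k}\Delta_{x_k}^*=\mathbb{1}$, and sets $O_k(\mathbf{x}_k)=\Delta_{x_k}\Delta_{x_k}^*$; to each internal unit $k$ (with input dimension $n$, the size of $O_{k_l}\otimes O_{k_r}$, and output dimension $m$) diagonal $n\times n$ matrices $D_{kj}$, $j=1,\dots,m$, with $\operatorname{Tr}[D_{kj}D_{kj}^*]=1$, and sets $O_k(\mathbf{x}_k)=\sum_{j=1}^m J_jD_{kj}\big(O_{k_l}(\mathbf{x}_{k_l})\otimes O_{k_r}(\mathbf{x}_{k_r})\big)D_{kj}^*J_j^*$, where $J_j$ is the $m\times n$ matrix whose $j$-th row consists of ones and all other entries are zero, and $\otimes$ is the Kronecker product. *)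

(* Defs.v *)
From HB Require Import structures.
From mathcomp Require Import all_boot all_order all_algebra.
From mathcomp Require Import complex mxtens.
Set Implicit Arguments. Unset Strict Implicit. Unset Printing Implicit Defensive.
Import Order.TTheory GRing.Theory Num.Theory.
Local Open Scope ring_scope.

Definition adjmx (C : numClosedFieldType) m n (M : 'M[C]_(m, n)) : 'M[C]_(n, m) :=
  \matrix_(i, j) (M j i)^*.

Definition Jmx (C : pzRingType) m n (j : 'I_m) : 'M[C]_(m, n) :=
  \matrix_(a, b) (a == j)%:R.

(* A circuit over variables x_0..x_{N-1}, value sets Om i, indexed by the
   output (square) dimension of the unit.  A leaf carries a variable index i
   and matrices Delta_x (x in Om i); an internal unit with output dimension m
   carries the matrices D_j (j < m) of size (nl*nr) x (nl*nr). *)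
Inductive circuit (C : Type) (N : nat) (Om : 'I_N -> finType) : nat -> Type :=
| Leaf (i : 'I_N) (d : nat) (Delta : Om i -> 'M[C]_d) : circuit C Om d
| Node (nl nr m : nat) (l : circuit C Om nl) (r : circuit C Om nr)
       (D : 'I_m -> 'M[C]_(nl * nr)) : circuit C Om m.

Arguments Leaf {C N Om} i {d} Delta.
Arguments Node {C N Om nl nr m} l r D.

Fixpoint leaves C N (Om : 'I_N -> finType) m (c : circuit C Om m) : seq 'I_N :=
  match c with
  | Leaf i _ _ => [:: i]
  | Node _ _ _ l r _ => leaves l ++ leaves r
  end.

Definition partition_circuit C N (Om : 'I_N -> finType) m (c : circuit C Om m) :=
  perm_eq (leaves c) (enum 'I_N).

Fixpoint asg C N (Om : 'I_N -> finType) m (c : circuit C Om m) : Type :=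
  match c with
  | Leaf i _ _ => Om i
  | Node _ _ _ l r _ => (asg l * asg r)%type
  end.

Fixpoint Op (C : numClosedFieldType) N (Om : 'I_N -> finType) m
    (c : circuit C Om m) : asg c -> 'M[C]_m :=
  match c in circuit _ _ m return asg c -> 'M[C]_m with
  | Leaf i d Delta => fun x => Delta x *m adjmx (Delta x)
  | Node nl nr m l r D => fun x =>
      \sum_(j < m)
        (@Jmx C m (nl * nr)%N j *m D j *m (@Op C N Om nl l x.1 *t @Op C N Om nr r x.2)
           *m adjmx (D j) *m adjmx (@Jmx C m (nl * nr)%N j))
  end.

Fixpoint dpu_circuit (C : numClosedFieldType) N (Om : 'I_N -> finType) m
    (c : circuit C Om m) : Prop :=
  match c with
  | Leaf i d Delta =>
      (forall x, is_diag_mx (Delta x)) /\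
      \sum_(x : Om i) (Delta x *m adjmx (Delta x)) = 1%:M
  | Node nl nr m l r D =>
      dpu_circuit l /\ dpu_circuit r /\
      (forall j, is_diag_mx (D j) /\ \tr (D j *m adjmx (D j)) = 1)
  end.

Inductive subunit C N (Om : 'I_N -> finType) n (k : circuit C Om n) :
    forall m, circuit C Om m -> Prop :=
| subunit_refl : subunit k k
| subunit_l nl nr m (l : circuit C Om nl) (r : circuit C Om nr) D :
    subunit k l -> subunit k (Node (m:=m) l r D)
| subunit_r nl nr m (l : circuit C Om nl) (r : circuit C Om nr) D :
    subunit k r -> subunit k (Node (m:=m) l r D).

Arguments Op {C N Om m} c x.
Arguments asg {C N Om m} c.
Arguments leaves {C N Om m} c.
Arguments dpu_circuit {C N Om m} c.
Arguments partition_circuit {C N Om m} c.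

(* Main.v *)
Require Import Defs.
From HB Require Import structures.
From mathcomp Require Import all_boot all_order all_algebra.
From mathcomp Require Import complex mxtens.
Import Order.TTheory GRing.Theory Num.Theory.
Local Open Scope ring_scope.

Lemma diag_selfadj (C : numClosedFieldType) d (A : 'M[C]_d) :
  is_diag_mx A -> is_diag_mx (A *m adjmx A).
Proof.
move=> /is_diag_mxP H; apply/is_diag_mxP => a b nab.
rewrite !mxE big1 // => k _; rewrite mxE.
have [eka|nka] := eqVneq (k : nat) (a : nat).
  rewrite (H b k); first by rewrite conjC0 mulr0.
  by rewrite eka eq_sym.
by rewrite H ?mul0r // eq_sym.
Qed.

Lemma diag_J (C : numClosedFieldType) m n (j : 'I_m) (A : 'M[C]_(m, n)) :
  (forall a l, a != j -> A a l = 0) -> is_diag_mx (A *m adjmx (Jmx C n j)).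
Proof.
move=> H; apply/is_diag_mxP => a b nab.
rewrite !mxE big1 // => k _; rewrite !mxE.
have [eaj|naj] := eqVneq a j.
  have nbj : b != j by apply/negP => /eqP E; move: nab; rewrite eaj E eqxx.
  by rewrite (negbTE nbj) conjC0 mulr0.
by rewrite H ?mul0r.
Qed.

Lemma J_rows (C : numClosedFieldType) m n p (j : 'I_m) (B : 'M[C]_(n, p)) a l :
  a != j -> (Jmx C n j *m B) a l = 0.
Proof.
move=> naj; rewrite !mxE big1 // => k _; rewrite !mxE (negbTE naj) mul0r //.
Qed.

Lemma Op_diag (C : numClosedFieldType) N (Om : 'I_N -> finType) m
  (c : circuit C Om m) : dpu_circuit c -> forall x, is_diag_mx (Op c x).
Proof.
case: c => [i d Delta | nl nr m' l r D] /=.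
  by move=> [H _] x; apply: diag_selfadj.
move=> _ x; apply/is_diag_mxP => a b nab.
rewrite summxE big1 // => j _.
have HJ := @diag_J C m' (nl * nr) j (Jmx C (nl * nr) j *m D j *m
     (Op l x.1 *t Op r x.2) *m adjmx (D j)).
move/is_diag_mxP: (HJ (fun a' l' naj => ltac:(rewrite -!mulmxA; exact: J_rows))).
by apply.
Qed.

Lemma subunit_dpu (C : numClosedFieldType) N (Om : 'I_N -> finType) n (k : circuit C Om n) m
  (c : circuit C Om m) : subunit k c -> @dpu_circuit C N Om m c -> dpu_circuit k.
Proof.
elim => //= nl nr m' l r D _ IH; [move=> [? _]| move=> [_ [? _]]]; exact: IH.
Qed.

Theorem proposition9 (R : rcfType) (N : nat) (Om : 'I_N -> finType) (m : nat)
    (c : circuit R[i] Om m) :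
  partition_circuit c -> dpu_circuit c ->
  forall (n : nat) (k : circuit R[i] Om n), subunit k c ->
  forall x : asg k, is_diag_mx (Op k x).
Proof.
move=> _ Hc n k Hk x; apply: Op_diag; exact: subunit_dpu Hk Hc.
Qed.
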